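(* Let $n=2k+1$ with $k\ge 1$. Then $\{a_i,c_i : i=1,2,\ldots,n\}$ is a strong resolving set of $U_n$.
   Context: For $n\ge 3$, $U_n$ is the graph with vertex set $\{a_i,b_i,c_i,d_i,e_i : 1\le i\le n\}$ and edge set $\{a_ia_{i+1}, b_ib_{i+1}, e_ie_{i+1}, a_ib_i, b_ic_i, c_id_i, d_ie_i, c_{i+1}d_i : 1\le i\le n\}$, indices taken modulo $n$. $d$ is the graph distance. A vertex $w$ strongly resolves distinct vertices $u,v$ if $d(v,w)=d(v,u)+d(u,w)$ or $d(u,w)=d(u,v)+d(v,w)$. A set $S$ is a strong resolving set if every two distinct vertices are strongly resolved by some vertex of $S$. *)

(* Defs.v *)
From mathcomp Require Import all_boot.
Set Implicit Arguments. Unset Strict Implicit. Unset Printing Implicit Defensive.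

Section Dist.
Variable (V : finType) (adj : rel V).

Definition walk_len (u v : V) (k : nat) : bool :=
  [exists p : k.-tuple V, path adj u p && (last u p == v)].

(* d(u,v) = least k such that a walk of length k joins u and v
   (a shortest walk has at most #|V|-1 edges; value #|V| if disconnected,
   which never happens for the connected graph U_n). *)
Definition gdist (u v : V) : nat := find (walk_len u v) (iota 0 #|V|).

Definition strongly_resolves (w u v : V) : bool :=
  (gdist v w == gdist v u + gdist u w) || (gdist u w == gdist u v + gdist v w).

Definition strong_resolving_set (S : {set V}) : Prop :=
  forall u v : V, u != v -> exists2 w, w \in S & strongly_resolves w u v.
End Dist.

(* The graph U_n.  A vertex is a pair (t, i) with t : 'I_5 the kind
   (0 = a, 1 = b, 2 = c, 3 = d, 4 = e) and i : 'I_n the index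
   (indices 0..n-1 stand for 1..n, taken modulo n). *)
Definition Uvert (n : nat) := ('I_5 * 'I_n)%type.

Definition kind_a := 0. Definition kind_b := 1. Definition kind_c := 2.
Definition kind_d := 3. Definition kind_e := 4.

Definition Uedge (n : nat) (x y : Uvert n) : bool :=
  let: (s, i) := x in let: (t, j) := y in
  let nxt := (j == (i.+1 %% n) :> nat) in
  [||
      [&& s == kind_a :> nat, t == kind_a :> nat & nxt],
      [&& s == kind_b :> nat, t == kind_b :> nat & nxt],
      [&& s == kind_e :> nat, t == kind_e :> nat & nxt],
      [&& s == kind_a :> nat, t == kind_b :> nat & i == j],
      [&& s == kind_b :> nat, t == kind_c :> nat & i == j],
      [&& s == kind_c :> nat, t == kind_d :> nat & i == j],
      [&& s == kind_d :> nat, t == kind_e :> nat & i == j] |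
      [&& s == kind_d :> nat, t == kind_c :> nat & nxt] ].

Definition Uadj (n : nat) : rel (Uvert n) := fun x y => Uedge x y || Uedge y x.

Definition Udist (n : nat) : Uvert n -> Uvert n -> nat := gdist (@Uadj n).

Definition ac_set (n : nat) : {set Uvert n} :=
  [set x : Uvert n | (x.1 == kind_a :> nat) || (x.1 == kind_c :> nat)].

(* Main.v *)
Require Import Defs.
From mathcomp Require Import all_boot zify.
Set Implicit Arguments. Unset Strict Implicit. Unset Printing Implicit Defensive.

Section Gen.
Variable (V : finType) (adj : rel V).

Lemma find_iota_eq (a : pred nat) N k :
  k < N -> a k -> (forall i, i < k -> ~~ a i) -> find a (iota 0 N) = k.
Proof.
move=> kN ak lt.
have -> : N = k + (N - k) by lia.
rewrite iotaD find_cat.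
have -> : has a (iota 0 k) = false.
  apply/negP => /hasP [i]; rewrite mem_iota => /andP [_ ik] ai.
  by move: (lt i ik); rewrite ai.
rewrite size_iota add0n.
case E: (N - k) => [|r]; first lia.
by rewrite /= ak addn0.
Qed.

Lemma gdist_char (x : V) (g : V -> nat) :
  g x = 0 ->
  (forall y z, adj y z -> g z <= g y + 1) ->
  (forall y, y != x -> exists z, adj z y /\ g z + 1 = g y) ->
  (forall y, g y < #|V|) ->
  forall y, gdist adj x y = g y.
Proof.
move=> g0 lip desc bnd y.
have low : forall p z, path adj z p -> g (last z p) <= g z + size p.
  elim=> [|q p IH] z /=; first lia.
  move=> /andP [hzq hp]; have := IH _ hp; have := lip _ _ hzq; lia.
have up : forall k y, g y = k -> walk_len adj x y k.
  elim=> [|k IH] y0 hy.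
    case: (eqVneq y0 x) => [->|ne].
      by apply/existsP; exists [tuple]; rewrite /=.
    by have [z [_ hz]] := desc _ ne; lia.
  have ne : y0 != x by apply/eqP => e; rewrite e g0 in hy.
  have [z [hzy hz]] := desc _ ne.
  have /existsP [p /andP [hp /eqP hl]] := IH z ltac:(lia).
  apply/existsP; exists (rcons_tuple p y0).
  by rewrite /= rcons_path hp hl hzy last_rcons eqxx.
rewrite /gdist; apply: find_iota_eq => //; first exact: up.
move=> i hi; apply/negP => /existsP [p /andP [hp /eqP hl]].
have := low _ _ hp; rewrite hl g0 size_tuple; lia.
Qed.
End Gen.

Definition cyc n x := minn x (n - x).
Definition cs n m := minn m.+1 (n - m.+1).
Definition cp n m := minn (maxn (m - 1) (1 - m)) (n + 1 - m).
Definition Tf c := minn (2 * c) (c + 2).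

Definition F n (s t m : nat) : nat :=
  match s, t with
  | 0, 0 => cyc n m | 0, 1 => cyc n m + 1 | 0, 2 => cyc n m + 2
  | 0, 3 => minn (cyc n m) (cs n m) + 3 | 0, 4 => minn (cyc n m) (cs n m) + 4
  | 1, 0 => cyc n m + 1 | 1, 1 => cyc n m | 1, 2 => cyc n m + 1
  | 1, 3 => minn (cyc n m) (cs n m) + 2 | 1, 4 => minn (cyc n m) (cs n m) + 3
  | 2, 0 => cyc n m + 2 | 2, 1 => cyc n m + 1 | 2, 2 => Tf (cyc n m)
  | 2, 3 => minn (Tf (cyc n m)) (Tf (cs n m)) + 1 | 2, 4 => minn (cyc n m) (cs n m) + 2
  | 3, 0 => minn (cyc n m) (cp n m) + 3 | 3, 1 => minn (cyc n m) (cp n m) + 2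
  | 3, 2 => minn (Tf (cyc n m)) (Tf (cp n m)) + 1 | 3, 3 => Tf (cyc n m) | 3, 4 => cyc n m + 1
  | 4, 0 => minn (cyc n m) (cp n m) + 4 | 4, 1 => minn (cyc n m) (cp n m) + 3
  | 4, 2 => minn (cyc n m) (cp n m) + 2 | 4, 3 => cyc n m + 1 | 4, 4 => cyc n m
  | _, _ => 0
  end.

Definition Fv n (x y : Uvert n) : nat := F n x.1 y.1 ((y.2 + n - x.2) %% n).

Lemma modspec n x : 0 < n ->
  x %% n < n /\ (x < n -> x %% n = x) /\ (n <= x -> x < n + n -> x %% n = x - n).
Proof.
move=> n0; split; first by rewrite ltn_pmod. split.
  by move=> h; rewrite modn_small.
move=> h1 h2; have -> : x = (x - n) + n by lia.
by rewrite modnDr modn_small; lia.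
Qed.

Lemma modcase n x : 0 < n -> x < n + n ->
  (x < n /\ x %% n = x) \/ (n <= x /\ x %% n = x - n).
Proof.
move=> n0 h; case: (ltnP x n) => h1; [left|right]; split => //.
  by rewrite modn_small.
by have [_ [_ ->]] := @modspec n x n0.
Qed.

Ltac nomod t n0 := lazymatch t with context [_ %% n0] => fail | _ => idtac end.
Ltac genmod n0 := repeat match goal with |- context [?x %% n0] =>
  nomod x n0; have [[? ->]|[? ->]] := @modcase n0 x ltac:(lia) ltac:(lia); try (exfalso; lia) end.

Ltac arith := unfold cyc, cs, cp, Tf; lia.
Lemma minn_case a b : (a < b /\ minn a b = a) \/ (b <= a /\ minn a b = b).
Proof. rewrite /minn; case: ltnP; [left|right]; done. Qed.
Lemma maxn_case a b : (a < b /\ maxn a b = b) \/ (b <= a /\ maxn a b = a).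
Proof. rewrite /maxn; case: ltnP; [left|right]; done. Qed.
Ltac nomin t := lazymatch t with context [minn _ _] => fail | context [maxn _ _] => fail | _ => idtac end.
Ltac elimmin := repeat match goal with
 | |- context [minn ?a ?b] => nomin a; nomin b; have [[? ->]|[? ->]] := minn_case a b; try (exfalso; lia)
 | |- context [maxn ?a ?b] => nomin a; nomin b; have [[? ->]|[? ->]] := maxn_case a b; try (exfalso; lia)
 end.
Ltac disj := first [ left; lia | right; disj | lia ].



Ltac caseord s := case: s => [[|[|[|[|[|?]]]]] ?] //=.


Definition nxtrel n m m' := (m.+1 < n /\ m' = m.+1) \/ (m = n.-1 /\ m' = 0).

Lemma lipH n s t m m' : 3 <= n -> m < n -> nxtrel n m m' ->
  s < 5 -> (t = 0 \/ t = 1 \/ t = 4) ->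
  F n s t m' <= F n s t m + 1 /\ F n s t m <= F n s t m' + 1.
Proof.
move=> hn hm [[h1 ->]|[h1 ->]] hs ht;
(case: s hs => [|[|[|[|[|?]]]]] // _);
(case: ht => [->|[->|->]]); rewrite /F; try subst m; unfold cyc, cs, cp, Tf; elimmin; lia.
Qed.

Lemma lipV n s t m : 3 <= n -> m < n -> s < 5 -> t < 4 ->
  F n s t.+1 m <= F n s t m + 1 /\ F n s t m <= F n s t.+1 m + 1.
Proof.
move=> hn hm hs ht;
(case: s hs => [|[|[|[|[|?]]]]] // _);
(case: t ht => [|[|[|[|?]]]] // _); rewrite /F; unfold cyc, cs, cp, Tf; elimmin; lia.
Qed.

Lemma lipD n s m m' : 3 <= n -> m < n -> nxtrel n m m' -> s < 5 ->
  F n s 2 m' <= F n s 3 m + 1 /\ F n s 3 m <= F n s 2 m' + 1.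
Proof.
move=> hn hm [[h1 ->]|[h1 ->]] hs;
(case: s hs => [|[|[|[|[|?]]]]] // _); rewrite /F; try subst m; unfold cyc, cs, cp, Tf; elimmin; lia.
Qed.

Lemma nxt_mdiff n (i0 j j' : nat) : 0 < n -> i0 < n -> j < n -> j' = j.+1 %% n ->
  nxtrel n ((j + n - i0) %% n) ((j' + n - i0) %% n).
Proof.
move=> n0 hi hj ->; rewrite /nxtrel; genmod n; first [left; split; lia | right; split; lia].
Qed.

Lemma mdiff_lt n (i j : nat) : 0 < n -> (j + n - i) %% n < n.
Proof. by move=> n0; rewrite ltn_pmod. Qed.

Lemma lip n (hn : 3 <= n) (x y z : Uvert n) :
  Uedge y z -> Fv x z <= Fv x y + 1 /\ Fv x y <= Fv x z + 1.
Proof.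
case: x => s0 i0; case: y => t j; case: z => t' j'.
have hi0 := ltn_ord i0; have hj := ltn_ord j; have hj' := ltn_ord j'.
have hs := ltn_ord s0.
have n0 : 0 < n by lia.
have hm := @mdiff_lt n i0 j n0.
rewrite /Uedge /Fv /=.
move=> /orP [H|/orP [H|/orP [H|/orP [H|/orP [H|/orP [H|/orP [H|H]]]]]]];
 case/and3P: H => /eqP -> /eqP -> /eqP E; unfold kind_a, kind_b, kind_c, kind_d, kind_e.
- by apply: lipH => //; [exact: (nxt_mdiff n0 hi0 hj E) | lia].
- by apply: lipH => //; [exact: (nxt_mdiff n0 hi0 hj E) | lia].
- by apply: lipH => //; [exact: (nxt_mdiff n0 hi0 hj E) | lia].
- subst j'; have := @lipV n s0 0 _ hn hm hs isT; lia.
- subst j'; have := @lipV n s0 1 _ hn hm hs isT; lia.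
- subst j'; have := @lipV n s0 2 _ hn hm hs isT; lia.
- subst j'; have := @lipV n s0 3 _ hn hm hs isT; lia.
- have := @lipD n s0 _ _ hn hm (nxt_mdiff n0 hi0 hj E) hs; lia.
Qed.

Lemma descF0 n s m mn mp : 3 <= n -> m < n -> mp < n -> nxtrel n m mn -> nxtrel n mp m ->
  s < 5 -> ~ (s = 0 /\ m = 0) ->
  let f := F n s in
  f 0 mn + 1 = f 0 m \/ f 0 mp + 1 = f 0 m \/ f 1 m + 1 = f 0 m.
Proof.
move=> hn hm hmp hN hP hs hne /=.
case: hN => [[h1 h4]|[h1 h4]]; case: hP => [[h2 h3]|[h2 h3]]; subst;
(case: s hs hne => [|[|[|[|[|?]]]]] // _) => hne; rewrite /F; unfold cyc, cs, cp, Tf; elimmin; disj.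
Qed.

Lemma descF1 n s m mn mp : 3 <= n -> m < n -> mp < n -> nxtrel n m mn -> nxtrel n mp m ->
  s < 5 -> ~ (s = 1 /\ m = 0) ->
  let f := F n s in
  f 1 mn + 1 = f 1 m \/ f 1 mp + 1 = f 1 m \/ f 0 m + 1 = f 1 m \/ f 2 m + 1 = f 1 m.
Proof.
move=> hn hm hmp hN hP hs hne /=.
case: hN => [[h1 h4]|[h1 h4]]; case: hP => [[h2 h3]|[h2 h3]]; subst;
(case: s hs hne => [|[|[|[|[|?]]]]] // _) => hne; rewrite /F; unfold cyc, cs, cp, Tf; elimmin; disj.
Qed.

Lemma descF2 n s m mn mp : 3 <= n -> m < n -> mp < n -> nxtrel n m mn -> nxtrel n mp m ->
  s < 5 -> ~ (s = 2 /\ m = 0) ->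
  let f := F n s in
  f 1 m + 1 = f 2 m \/ f 3 m + 1 = f 2 m \/ f 3 mp + 1 = f 2 m.
Proof.
move=> hn hm hmp hN hP hs hne /=.
case: hN => [[h1 h4]|[h1 h4]]; case: hP => [[h2 h3]|[h2 h3]]; subst;
(case: s hs hne => [|[|[|[|[|?]]]]] // _) => hne; rewrite /F; unfold cyc, cs, cp, Tf; elimmin; disj.
Qed.

Lemma descF3 n s m mn mp : 3 <= n -> m < n -> mp < n -> nxtrel n m mn -> nxtrel n mp m ->
  s < 5 -> ~ (s = 3 /\ m = 0) ->
  let f := F n s in
  f 2 m + 1 = f 3 m \/ f 2 mn + 1 = f 3 m \/ f 4 m + 1 = f 3 m.
Proof.
move=> hn hm hmp hN hP hs hne /=.
case: hN => [[h1 h4]|[h1 h4]]; case: hP => [[h2 h3]|[h2 h3]]; subst;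
(case: s hs hne => [|[|[|[|[|?]]]]] // _) => hne; rewrite /F; unfold cyc, cs, cp, Tf; elimmin; disj.
Qed.

Lemma descF4 n s m mn mp : 3 <= n -> m < n -> mp < n -> nxtrel n m mn -> nxtrel n mp m ->
  s < 5 -> ~ (s = 4 /\ m = 0) ->
  let f := F n s in
  f 4 mn + 1 = f 4 m \/ f 4 mp + 1 = f 4 m \/ f 3 m + 1 = f 4 m.
Proof.
move=> hn hm hmp hN hP hs hne /=.
case: hN => [[h1 h4]|[h1 h4]]; case: hP => [[h2 h3]|[h2 h3]]; subst;
(case: s hs hne => [|[|[|[|[|?]]]]] // _) => hne; rewrite /F; unfold cyc, cs, cp, Tf; elimmin; disj.
Qed.




Lemma ordP_eq n (j : 'I_n) : (j : nat) = (ord_pred j).+1 %% n.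
Proof. by have /= -> := congr1 val (ord_predK j). Qed.

Lemma mdiff0 n (i j : nat) : 0 < n -> i < n -> j < n -> (j + n - i) %% n = 0 -> i = j.
Proof. move=> n0 hi hj; genmod n; try split => ?; lia. Qed.

Ltac adjt j := rewrite /Uadj /Uedge /= -?(ordP_eq j) ?eqxx /= ?orbT.

Lemma desc n (hn : 3 <= n) (x y : Uvert n) :
  y != x -> exists z, Uadj z y /\ Fv x z + 1 = Fv x y.
Proof.
case: x => s0 i0; case: y => t j => hne.
have n0 : 0 < n by lia.
have hi0 := ltn_ord i0; have hj := ltn_ord j; have hs := ltn_ord s0; have ht := ltn_ord t.
have hm := @mdiff_lt n i0 j n0.
have hmp := @mdiff_lt n i0 (ord_pred j) n0.
have hN := @nxt_mdiff n i0 j (ordS j) n0 hi0 hj erefl.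
have hP := @nxt_mdiff n i0 (ord_pred j) j n0 hi0 (ltn_ord _) (ordP_eq j).
have hne' : ~ (s0 = t :> nat /\ (j + n - i0) %% n = 0).
  move=> [e1 e2]; have e3 := mdiff0 n0 hi0 hj e2.
  move/eqP: hne; apply; congr (_, _); apply: val_inj => //=.
clear hne; rewrite /Fv /=.
case: t ht hne' => [[|[|[|[|[|?]]]]] tp] //= _ hne'.
- have /= [E|[E|E]] := descF0 hn hm hmp hN hP hs hne'.
  + by exists (Ordinal tp, ordS j); split; [adjt j | exact E].
  + by exists (Ordinal tp, ord_pred j); split; [adjt j | exact E].
  + by exists (@Ordinal 5 1 isT, j); split; [adjt j | exact E].
- have /= [E|[E|[E|E]]] := descF1 hn hm hmp hN hP hs hne'.
  + by exists (Ordinal tp, ordS j); split; [adjt j | exact E].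
  + by exists (Ordinal tp, ord_pred j); split; [adjt j | exact E].
  + by exists (@Ordinal 5 0 isT, j); split; [adjt j | exact E].
  + by exists (@Ordinal 5 2 isT, j); split; [adjt j | exact E].
- have /= [E|[E|E]] := descF2 hn hm hmp hN hP hs hne'.
  + by exists (@Ordinal 5 1 isT, j); split; [adjt j | exact E].
  + by exists (@Ordinal 5 3 isT, j); split; [adjt j | exact E].
  + by exists (@Ordinal 5 3 isT, ord_pred j); split; [adjt j | exact E].
- have /= [E|[E|E]] := descF3 hn hm hmp hN hP hs hne'.
  + by exists (@Ordinal 5 2 isT, j); split; [adjt j | exact E].
  + by exists (@Ordinal 5 2 isT, ordS j); split; [adjt j | exact E].
  + by exists (@Ordinal 5 4 isT, j); split; [adjt j | exact E].
- have /= [E|[E|E]] := descF4 hn hm hmp hN hP hs hne'.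
  + by exists (Ordinal tp, ordS j); split; [adjt j | exact E].
  + by exists (Ordinal tp, ord_pred j); split; [adjt j | exact E].
  + by exists (@Ordinal 5 3 isT, j); split; [adjt j | exact E].
Qed.



Lemma Fv_self n (x : Uvert n) : Fv x x = 0.
Proof.
case: x => s i; rewrite /Fv /= addKn modnn.
have := ltn_ord s; case: (nat_of_ord s) => [|[|[|[|[|?]]]]] //= _; rewrite /Tf /cyc; lia.
Qed.

Lemma F_bound n s t m : m < n -> F n s t m <= n + 4.
Proof.
move=> hm; case: s => [|[|[|[|[|?]]]]]; case: t => [|[|[|[|[|?]]]]]; rewrite /F //;
  unfold cyc, cs, cp, Tf; elimmin; lia.
Qed.

Lemma dist_eq n (hn : 3 <= n) (x y : Uvert n) : gdist (@Uadj n) x y = Fv x y.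
Proof.
apply: gdist_char.
- exact: Fv_self.
- move=> a b /orP [h|h]; have := lip hn x h; lia.
- move=> a ha; exact: desc.
- move=> a; rewrite card_prod !card_ord.
  case: a => t j; rewrite /Fv /=.
  have := @F_bound n x.1 t _ (ltn_pmod (j + n - x.2) (ltnW (ltnW hn))); lia.
Qed.



Lemma ab_rel n t m : 3 <= n -> m < n -> (t = 1 \/ t = 3 \/ t = 4) ->
  F n t 0 m = F n t 1 m + 1.
Proof. move=> hn hm [->|[->|->]]; rewrite /F; unfold cyc, cs, cp, Tf; elimmin; lia. Qed.

Lemma mdiff_sym n (i j : nat) : 0 < n -> i < n -> j < n ->
  ((j + n - i) %% n = 0 -> (i + n - j) %% n = 0) /\
  (0 < (j + n - i) %% n -> (i + n - j) %% n = n - (j + n - i) %% n).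
Proof. move=> n0 hi hj; genmod n; try split => ?; lia. Qed.

Lemma mdiff_S n (i : nat) : 2 <= n -> i < n -> ((i.+1 %% n) + n - i) %% n = 1.
Proof. move=> n2 hi; genmod n; lia. Qed.

Lemma resF n k s t m m' m'' : n = 2 * k + 1 -> 1 <= k -> m < n ->
  (m = 0 -> m' = 0) -> (0 < m -> m' = n - m) -> nxtrel n m' m'' ->
  ((s = 3 /\ t = 3) \/ (s = 3 /\ t = 4) \/ (s = 4 /\ t = 4)) -> (s = t -> m <> 0) ->
  (m <= k -> F n t 2 m' = F n t s m' + F n s 2 0) /\
  (k < m -> F n t 2 m'' = F n t s m' + F n s 2 1).
Proof.
move=> hn hk hm h0 h1 hN hst hne.
have [hm0|hm0] : m = 0 \/ 0 < m by lia.
- have e := h0 hm0; subst m'.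
  case: hN => [[a b]|[a b]]; subst;
  case: hst => [[-> ->]|[[-> ->]|[-> ->]]]; rewrite /F; unfold cyc, cs, cp, Tf; elimmin; lia.
- have e := h1 hm0; subst m'.
  case: hN => [[a b]|[a b]]; subst;
  case: hst => [[-> ->]|[[-> ->]|[-> ->]]]; rewrite /F; unfold cyc, cs, cp, Tf; elimmin; lia.
Qed.



Theorem lemma4p6 (k n : nat) (hk : 1 <= k) (hn : n = 2 * k + 1) :
  strong_resolving_set (@Uadj n) (ac_set n).
Proof.
have n3 : 3 <= n by lia.
have n0 : 0 < n by lia.
move=> [s i] [t j] huv.
have hi := ltn_ord i; have hj := ltn_ord j; have hs := ltn_ord s; have ht := ltn_ord t.
have hne : ~ (s = t :> nat /\ i = j :> nat).
  move=> [e1 e2]; move/eqP: huv; apply; congr (_, _); exact: val_inj.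
rewrite /strongly_resolves.
have [hS|hS] : (s = 0 :> nat \/ s = 2 :> nat) \/ ~ (s = 0 :> nat \/ s = 2 :> nat) by lia.
  exists (s, i); first by rewrite inE /= /kind_a /kind_c; case: hS => ->.
  by apply/orP; left; rewrite !dist_eq // Fv_self addn0 eqxx.
have [hT|hT] : (t = 0 :> nat \/ t = 2 :> nat) \/ ~ (t = 0 :> nat \/ t = 2 :> nat) by lia.
  exists (t, j); first by rewrite inE /= /kind_a /kind_c; case: hT => ->.
  by apply/orP; right; rewrite !dist_eq // Fv_self addn0 eqxx.
have hm1 := ltn_pmod (i + n - j) n0.
have hm2 := ltn_pmod (j + n - i) n0.
have [hS1|hS1] : s = 1 :> nat \/ s <> 1 :> nat by lia.
  exists (@Ordinal 5 0 isT, i); first by rewrite inE.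
  apply/orP; left; rewrite !dist_eq // /Fv /= hS1 addKn modnn; apply/eqP.
  have := @ab_rel n t _ n3 hm1 ltac:(lia); rewrite /F /cyc; lia.
have [hT1|hT1] : t = 1 :> nat \/ t <> 1 :> nat by lia.
  exists (@Ordinal 5 0 isT, j); first by rewrite inE.
  apply/orP; right; rewrite !dist_eq // /Fv /= hT1 addKn modnn; apply/eqP.
  have := @ab_rel n s _ n3 hm2 ltac:(lia); rewrite /F /cyc; lia.
have [hA|hA] : (s = 3 :> nat \/ (s = 4 :> nat /\ t = 4 :> nat)) \/ (s = 4 :> nat /\ t = 3 :> nat) by lia.
- have [sy1 sy2] := mdiff_sym n0 hi hj.
  have hN := @nxt_mdiff n j i (ordS i) n0 hj hi erefl.
  have hne2 : s = t :> nat -> (j + n - i) %% n <> 0.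
    by move=> e1 e2; apply: hne; split => //; exact: mdiff0 n0 hi hj e2.
  have [R1 R2] := @resF n k s t _ _ _ hn hk hm2 sy1 sy2 hN ltac:(lia) hne2.
  have [hle|hlt] := leqP ((j + n - i) %% n) k.
  + exists (@Ordinal 5 2 isT, i); first by rewrite inE.
    apply/orP; left; rewrite !dist_eq // /Fv /= addKn modnn; apply/eqP.
    exact: R1.
  + exists (@Ordinal 5 2 isT, ordS i); first by rewrite inE.
    apply/orP; left; rewrite !dist_eq // /Fv /= mdiff_S //; apply/eqP; last by lia.
    exact: R2.
- have [sy1 sy2] := mdiff_sym n0 hj hi.
  have hN := @nxt_mdiff n i j (ordS j) n0 hi hj erefl.
  have hne2 : t = s :> nat -> (i + n - j) %% n <> 0 by lia.
  have [R1 R2] := @resF n k t s _ _ _ hn hk hm1 sy1 sy2 hN ltac:(lia) hne2.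
  have [hle|hlt] := leqP ((i + n - j) %% n) k.
  + exists (@Ordinal 5 2 isT, j); first by rewrite inE.
    apply/orP; right; rewrite !dist_eq // /Fv /= addKn modnn; apply/eqP.
    exact: R1.
  + exists (@Ordinal 5 2 isT, ordS j); first by rewrite inE.
    apply/orP; right; rewrite !dist_eq // /Fv /= mdiff_S //; apply/eqP; last by lia.
    exact: R2.
Qed.
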